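(* Every finitely generated group is poly-ccc; that is, every finitely generated group $G$ admits a sequence of fair polytilings $(P_n)_{n\in\mathbb{N}}$ that is centered, cofinal, and coherent.
   Context: For a countable group $G$, a tuple $(T_1,\dots,T_k)$ of finite subsets of $G$, each containing $1_G$, is a polytile if there are non-empty sets $\Delta_1,\dots,\Delta_k\subseteq G$ with $G$ the disjoint union $\coprod_{1\le i\le k,\ \delta\in\Delta_i}\delta T_i$; then $P=(\Delta_1,\dots,\Delta_k;T_1,\dots,T_k)$ is a polytiling, and this partition of $G$ is the partition induced by $P$. The polytiling is fair if $|T_1|=\dots=|T_k|$. A sequence $P_n=(\Delta^n_1,\dots,\Delta^n_{k(n)};T^n_1,\dots,T^n_{k(n)})$ of polytilings is coherent if for each $n$ the partition induced by $P_n$ is finer than that induced by $P_{n+1}$; centered if $1_G\in\Delta_1^n$ for all $n$; cofinal if $T_1^n\subseteq T_1^{n+1}$ for all $n$ and $G=\bigcup_n T_1^n$. $G$ is poly-ccc if it admits a centered, cofinal, coherent sequence of fair polytilings. *)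

(* Defs.v *)
From Stdlib Require Import List.
Import ListNotations.
Set Implicit Arguments.

Record group := Group {
  carrier :> Type;
  gmul : carrier -> carrier -> carrier;
  gone : carrier;
  ginv : carrier -> carrier;
  gmulA : forall x y z, gmul x (gmul y z) = gmul (gmul x y) z;
  gmul1l : forall x, gmul gone x = x;
  gmul1r : forall x, gmul x gone = x;
  gmulVl : forall x, gmul (ginv x) x = gone;
  gmulVr : forall x, gmul x (ginv x) = gone
}.

Section Defs.
Variable G : group.

Definition finitely_generated : Prop :=
  exists S : list G,
    forall H : G -> Prop,
      H (gone G) ->
      (forall s, In s S -> H s) ->
      (forall x y, H x -> H y -> H (gmul G x y)) ->
      (forall x, H x -> H (ginv G x)) ->
      forall g, H g.

(* A tile-with-centers: a set of centers Delta_i and a finite set T_i,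
   the latter represented as a duplicate-free list. *)
Definition tile := ((G -> Prop) * list G)%type.

Definition in_translate (d : G) (T : list G) (g : G) : Prop :=
  exists t, In t T /\ g = gmul G d t.

(* P = (Delta_1,...,Delta_k; T_1,...,T_k) (as the list [(Delta_1,T_1);...])
   is a polytiling: k >= 1, each T_i a finite set containing 1, each Delta_i
   non-empty, and G is the disjoint union of the sets delta T_i indexed by
   (i, delta) with delta in Delta_i. *)
Definition is_polytiling (P : list tile) : Prop :=
  P <> [] /\
  (forall i D T, nth_error P i = Some (D, T) ->
     NoDup T /\ In (gone G) T /\ exists d, D d) /\
  (forall g : G, exists! id : nat * G,
     exists D T, nth_error P (fst id) = Some (D, T) /\ D (snd id) /\
                 in_translate (snd id) T g).

Definition fair (P : list tile) : Prop :=
  forall i j D T D' T', nth_error P i = Some (D, T) -> nth_error P j = Some (D', T') ->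
    length T = length T'.

Definition finer (P Q : list tile) : Prop :=
  forall i D T d, nth_error P i = Some (D, T) -> D d ->
    exists j D' T' d', nth_error Q j = Some (D', T') /\ D' d' /\
      forall g, in_translate d T g -> in_translate d' T' g.

Definition first_centers (P : list tile) : G -> Prop :=
  match P with (D, _) :: _ => D | [] => fun _ => False end.

Definition first_tile (P : list tile) : list G :=
  match P with (_, T) :: _ => T | [] => [] end.

Definition coherent (P : nat -> list tile) : Prop :=
  forall n, finer (P n) (P (S n)).

Definition centered (P : nat -> list tile) : Prop :=
  forall n, first_centers (P n) (gone G).

Definition cofinal (P : nat -> list tile) : Prop :=
  (forall n, incl (first_tile (P n)) (first_tile (P (S n)))) /\
  (forall g : G, exists n, In g (first_tile (P n))).

Definition poly_ccc : Prop :=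
  exists P : nat -> list tile,
    (forall n, is_polytiling (P n) /\ fair (P n)) /\
    centered P /\ cofinal P /\ coherent P.

End Defs.

(* Main.v *)
Require Import Defs.
From Stdlib Require Import List ClassicalEpsilon Classical Arith Lia Bool FunctionalExtensionality PropExtensionality.
Import ListNotations.

Definition dec (P : Prop) : bool := if excluded_middle_informative P then true else false.
Lemma decP P : dec P = true <-> P.
Proof. unfold dec; destruct excluded_middle_informative; split; intros; auto; discriminate. Qed.
Lemma decF P : dec P = false <-> ~ P.
Proof. unfold dec; destruct excluded_middle_informative; split; intros; auto; try discriminate; contradiction. Qed.

Lemma least (P : nat -> Prop) : (exists n, P n) -> exists n, P n /\ forall m, P m -> n <= m.
Proof.
  intros [n Hn]. revert Hn. induction n as [n IH] using lt_wf_ind. intros Hn.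
  destruct (classic (exists m, m < n /\ P m)) as [[m [Hm1 Hm2]]|Hno].
  - exact (IH m Hm1 Hm2).
  - exists n; split; auto. intros m Hm. destruct (le_lt_dec n m); auto.
    exfalso; apply Hno; eauto.
Qed.

Section TreeS.
Variable X : Type.
Variable nb : X -> list X.
Variable w : X.

Definition eqd (x y : X) : {x = y} + {x <> y} := excluded_middle_informative (x = y).

Fixpoint Rn (n : nat) (y : X) : Prop :=
  match n with 0 => y = w | S m => Rn m y \/ exists x, Rn m x /\ In y (nb x) end.
Definition reach y := exists n, Rn n y.

Lemma Rn_mono n m y : n <= m -> Rn n y -> Rn m y.
Proof. induction 1; simpl; auto. Qed.

Definition dist (y : X) : nat :=
  match excluded_middle_informative (reach y) with
  | left H => proj1_sig (constructive_indefinite_description _ (least _ H))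
  | right _ => 0 end.

Lemma dist_spec y : reach y -> Rn (dist y) y /\ forall m, Rn m y -> dist y <= m.
Proof.
  intros H. unfold dist. destruct excluded_middle_informative as [H'|H']; [|contradiction].
  destruct constructive_indefinite_description as [n Hn]; simpl; auto.
Qed.

Lemma reach_w : reach w.
Proof. exists 0; reflexivity. Qed.

Lemma dist_w : dist w = 0.
Proof. destruct (dist_spec w reach_w) as [_ H]. specialize (H 0 eq_refl). lia. Qed.

Lemma dist0 y : reach y -> dist y = 0 -> y = w.
Proof. intros H H0. destruct (dist_spec y H) as [H1 _]. rewrite H0 in H1. exact H1. Qed.

Lemma reach_nb x y : reach x -> In y (nb x) -> reach y /\ dist y <= S (dist x).
Proof.
  intros Hx Hy. destruct (dist_spec x Hx) as [H1 _].
  assert (Rn (S (dist x)) y) by (simpl; right; eauto).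
  split; [exists (S (dist x)); auto|]. apply (proj2 (dist_spec y (ex_intro (fun n => Rn n y) _ H))); auto.
Qed.

Lemma parent_ex y : reach y -> y <> w -> exists x, Rn (dist y - 1) x /\ In y (nb x).
Proof.
  intros H Hw. destruct (dist_spec y H) as [H1 H2].
  destruct (dist y) as [|k] eqn:E.
  - simpl in H1. contradiction.
  - simpl in H1. destruct H1 as [H1|H1].
    + specialize (H2 _ H1). lia.
    + replace (S k - 1) with k by lia. exact H1.
Qed.

Definition parent (y : X) : X :=
  match excluded_middle_informative (reach y /\ y <> w) with
  | left H => proj1_sig (constructive_indefinite_description _ (parent_ex y (proj1 H) (proj2 H)))
  | right _ => w end.

Lemma parent_spec y : reach y -> y <> w ->
  reach (parent y) /\ In y (nb (parent y)) /\ dist y = S (dist (parent y)).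
Proof.
  intros H Hw. unfold parent. destruct excluded_middle_informative as [H'|H']; [|tauto].
  destruct constructive_indefinite_description as [x [Hx1 Hx2]]; simpl.
  assert (Rx : reach x) by (eexists; eauto).
  destruct (reach_nb x y Rx Hx2) as [_ Hd].
  destruct (dist_spec x Rx) as [_ Hm]. specialize (Hm _ Hx1).
  assert (dist y <> 0) by (intro E; apply Hw; apply dist0; auto).
  repeat split; auto. lia.
Qed.

Definition anc (k : nat) (u : X) : X := Nat.iter k parent u.

Lemma anc_spec u k : reach u -> k <= dist u -> reach (anc k u) /\ dist (anc k u) = dist u - k.
Proof.
  intros Hu. induction k; intros Hk.
  - simpl. split; auto. lia.
  - destruct IHk as [H1 H2]; [lia|].
    assert (anc k u <> w) by (intro E; rewrite E, dist_w in H2; lia).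
    destruct (parent_spec _ H1 H) as [P1 [P2 P3]].
    change (anc (S k) u) with (parent (anc k u)). split; auto. lia.
Qed.

Definition desc v u := reach u /\ dist v <= dist u /\ anc (dist u - dist v) u = v.

Definition children v := nodup eqd (filter (fun c => dec (reach c /\ c <> w /\ parent c = v)) (nb v)).

Lemma children_spec v c : In c (children v) <-> In c (nb v) /\ reach c /\ c <> w /\ parent c = v.
Proof.
  unfold children. rewrite nodup_In, filter_In, decP. tauto.
Qed.

Lemma children_nd v : NoDup (children v).
Proof. apply NoDup_nodup. Qed.

Lemma child_dist v c : In c (children v) -> reach c /\ c <> w /\ parent c = v /\ reach v /\ dist c = S (dist v).
Proof.
  intros H. apply children_spec in H as [H1 [H2 [H3 H4]]].
  destruct (parent_spec c H2 H3) as [P1 [P2 P3]]. subst v. auto.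
Qed.

Lemma child_neq v c : In c (children v) -> c <> v.
Proof. intros H E. apply child_dist in H. subst. lia. Qed.

Lemma D1 v : reach v -> desc v v.
Proof. intros H. unfold desc. replace (dist v - dist v) with 0 by lia. simpl. auto. Qed.

Lemma D2 u : reach u -> desc w u.
Proof.
  intros H. unfold desc. rewrite dist_w. repeat split; auto. lia.
  destruct (anc_spec u (dist u - 0) H) as [A1 A2]; [lia|]. apply dist0; auto. lia.
Qed.

Lemma D3 v u : desc v u -> u <> v -> exists c, In c (children v) /\ desc c u.
Proof.
  intros [Hu [Hd Ha]] Hne.
  remember (dist u - dist v) as k.
  destruct k as [|k]. { simpl in Ha. contradiction. }
  destruct (anc_spec u k Hu) as [A1 A2]; [lia|].
  exists (anc k u).
  assert (Hw : anc k u <> w) by (intro E; rewrite E, dist_w in A2; lia).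
  destruct (parent_spec _ A1 Hw) as [P1 [P2 P3]].
  assert (parent (anc k u) = v) by exact Ha.
  split.
  - apply children_spec. rewrite <- H. auto.
  - unfold desc. repeat split; auto. lia. replace (dist u - dist (anc k u)) with k by lia. auto.
Qed.

Lemma D4 v c u : In c (children v) -> desc c u -> desc v u.
Proof.
  intros Hc [Hu [Hd Ha]]. apply child_dist in Hc as [C1 [C2 [C3 [C4 C5]]]].
  unfold desc. repeat split; auto. lia.
  replace (dist u - dist v) with (S (dist u - dist c)) by lia.
  change (parent (anc (dist u - dist c) u) = v). rewrite Ha. auto.
Qed.

Lemma D5 v c c' u : In c (children v) -> In c' (children v) -> desc c u -> desc c' u -> c = c'.
Proof.
  intros H1 H2 [_ [_ A]] [_ [_ A']]. apply child_dist in H1. apply child_dist in H2.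
  replace (dist c') with (dist c) in A' by lia. congruence.
Qed.

Lemma D6 v c u : In c (children v) -> desc c u -> u <> v.
Proof. intros H1 [_ [A _]] E. subst. apply child_dist in H1. lia. Qed.

Definition Fin v := exists L, forall u, desc v u -> In u L.

Lemma Fin_child v c : In c (children v) -> Fin v -> Fin c.
Proof. intros H [L HL]. exists L. intros u Hu. apply HL. eapply D4; eauto. Qed.

Lemma cover_list (l : list X) : (forall c, In c l -> Fin c) ->
  exists L, forall c u, In c l -> desc c u -> In u L.
Proof.
  induction l as [|a l IH]; intros H.
  - exists []. intros c u [].
  - destruct IH as [L HL]. intros; apply H; simpl; auto.
    destruct (H a (or_introl eq_refl)) as [La HLa].
    exists (La ++ L). intros c u [E|Hc] Hd; apply in_or_app.
    + subst; left; auto.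
    + right; eauto.
Qed.

Lemma konig v : reach v -> ~ Fin v -> exists c, In c (children v) /\ ~ Fin c.
Proof.
  intros Hv HF. apply NNPP. intro Hn. apply HF.
  destruct (cover_list (children v)) as [L HL].
  { intros c Hc. apply NNPP. intro; apply Hn; eauto. }
  exists (v :: L). intros u Hu. destruct (eqd u v) as [E|E]; [left; auto|].
  right. destruct (D3 v u Hu E) as [c [Hc Hd]]. eauto.
Qed.

Hypothesis inf : forall L, exists v, reach v /\ ~ In v L.

Lemma notFin_w : ~ Fin w.
Proof. intros [L HL]. destruct (inf L) as [v [Hv Hn]]. apply Hn, HL, D2, Hv. Qed.

Definition sub (v : X) : list X :=
  match excluded_middle_informative (Fin v) with
  | left H => nodup eqd (filter (fun u => dec (desc v u)) (proj1_sig (constructive_indefinite_description _ H)))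
  | right _ => [] end.

Lemma sub_spec v : Fin v -> NoDup (sub v) /\ forall u, In u (sub v) <-> desc v u.
Proof.
  intros H. unfold sub. destruct excluded_middle_informative as [H'|H']; [|contradiction].
  destruct constructive_indefinite_description as [L HL]; simpl.
  split. apply NoDup_nodup. intros u. rewrite nodup_In, filter_In, decP. split; [tauto|]. auto.
Qed.

Definition oddb v := Nat.odd (length (sub v)).
Definition oddFin h := filter (fun c => dec (Fin c) && oddb c) (children h).
Definition Ich h := filter (fun c => negb (dec (Fin c))) (children h).

Lemma NoDup_flat_map_disj (f : X -> list X) (l : list X) :
  NoDup l -> (forall x, In x l -> NoDup (f x)) ->
  (forall x y z, In x l -> In y l -> In z (f x) -> In z (f y) -> x = y) ->
  NoDup (flat_map f l).
Proof.
  induction l as [|a l IH]; intros Hn Hf Hd; simpl. constructor.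
  inversion Hn; subst. apply NoDup_app.
  - apply Hf; simpl; auto.
  - apply IH; auto. intros; apply Hf; simpl; auto. intros; eapply Hd; simpl; eauto.
  - intros z Hz Hz'. apply in_flat_map in Hz' as [y [Hy Hzy]].
    assert (a = y) by (eapply Hd; simpl; eauto). subst. contradiction.
Qed.

Lemma odd_sum (f : X -> nat) (l : list X) :
  Nat.odd (list_sum (map f l)) = Nat.odd (length (filter (fun c => Nat.odd (f c)) l)).
Proof.
  induction l as [|a l IH]; simpl; auto.
  rewrite Nat.odd_add, IH. destruct (Nat.odd (f a)); simpl; auto.
  rewrite Nat.odd_succ, <- Nat.negb_odd. reflexivity.
Qed.

Lemma parity v : reach v -> Fin v -> oddb v = Nat.odd (S (length (oddFin v))).
Proof.
  intros Hv HF.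
  set (ch := children v).
  assert (HFc : forall c, In c ch -> Fin c) by (intros; eapply Fin_child; eauto).
  set (L' := v :: flat_map sub ch).
  assert (ND : NoDup L').
  { constructor.
    - intro H. apply in_flat_map in H as [c [Hc Hv0]].
      apply (sub_spec c (HFc c Hc)) in Hv0. eapply D6; eauto.
    - apply NoDup_flat_map_disj. apply children_nd.
      intros; apply sub_spec; auto.
      intros x y z Hx Hy Hz Hz'. apply (sub_spec _ (HFc _ Hx)) in Hz. apply (sub_spec _ (HFc _ Hy)) in Hz'.
      eapply D5; eauto. }
  destruct (sub_spec v HF) as [NDs Hs].
  assert (Heq : forall u, In u L' <-> In u (sub v)).
  { intros u. rewrite Hs. unfold L'. simpl. split.
    - intros [E|H]. subst. apply D1; auto.
      apply in_flat_map in H as [c [Hc Hu]]. apply (sub_spec _ (HFc _ Hc)) in Hu. eapply D4; eauto.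
    - intros H. destruct (eqd u v) as [E|E]; [left; auto|]. right.
      destruct (D3 v u H E) as [c [Hc Hd]]. apply in_flat_map. exists c. split; auto.
      apply (sub_spec _ (HFc _ Hc)); auto. }
  assert (Hl: length (sub v) = length L').
  { apply Nat.le_antisymm; apply NoDup_incl_length; auto; intros u; apply Heq. }
  unfold oddb. rewrite Hl. unfold L'. simpl length. rewrite length_flat_map.
  rewrite !Nat.odd_succ, <- !Nat.negb_odd. f_equal. rewrite odd_sum. f_equal. f_equal.
  unfold oddFin. apply filter_ext_in. intros c Hc. rewrite (proj2 (decP _) (HFc c Hc)). reflexivity.
Qed.


Fixpoint pf (l : list X) (v : X) : option X :=
  match l with
  | x :: (y :: r) => if eqd v x then Some y else if eqd v y then Some x else pf r v
  | _ => None end.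

Lemma P1n : forall n l, length l <= n -> forall v u, NoDup l -> pf l v = Some u ->
  In v l /\ In u l /\ u <> v /\ pf l u = Some v.
Proof.
  induction n as [|n IH]; intros l Hl v u Hnd Hp.
  - destruct l; simpl in *; [discriminate|lia].
  - destruct l as [|x [|y r]]; simpl in Hp; try discriminate.
    apply NoDup_cons_iff in Hnd as [Hx Hnd1]. apply NoDup_cons_iff in Hnd1 as [Hy Hnd2].
    assert (Hxy : x <> y) by (intro E; subst; apply Hx; left; auto).
    destruct (eqd v x) as [E|E].
    + injection Hp as Hp. subst v u. simpl. repeat split; auto.
      destruct (eqd y x); [congruence|]. destruct (eqd y y); congruence.
    + destruct (eqd v y) as [E'|E'].
      * injection Hp as Hp. subst v u. simpl. repeat split; auto.
        destruct (eqd x x); congruence.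
      * simpl in Hl. destruct (IH r ltac:(lia) v u Hnd2 Hp) as [A [B [C D]]].
        simpl. repeat split; auto.
        destruct (eqd u x); [subst; exfalso; apply Hx; right; auto|].
        destruct (eqd u y); [subst; contradiction|]. auto.
Qed.

Lemma P1 l v u : NoDup l -> pf l v = Some u -> In v l /\ In u l /\ u <> v /\ pf l u = Some v.
Proof. intros; eapply P1n; eauto. Qed.

Lemma P2n : forall n l, length l <= n -> forall v, NoDup l -> In v l -> pf l v = None ->
  exists l', l = l' ++ [v] /\ Nat.even (length l') = true.
Proof.
  induction n as [|n IH]; intros l Hl v Hnd Hin Hp.
  - destruct l; simpl in *; [contradiction|lia].
  - destruct l as [|x [|y r]]; simpl in Hp.
    + contradiction.
    + destruct Hin as [E|[]]. subst. exists []. auto.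
    + destruct (eqd v x); [discriminate|]. destruct (eqd v y); [discriminate|].
      apply NoDup_cons_iff in Hnd as [Hx Hnd1]. apply NoDup_cons_iff in Hnd1 as [Hy Hnd2].
      destruct Hin as [E|[E|Hin]]; try congruence.
      simpl in Hl. destruct (IH r ltac:(lia) v Hnd2 Hin Hp) as [l' [E1 E2]].
      exists (x :: y :: l'). subst. simpl. auto.
Qed.

Lemma P2 l v : NoDup l -> In v l -> pf l v = None -> exists l', l = l' ++ [v] /\ Nat.even (length l') = true.
Proof. intros; eapply P2n; eauto. Qed.

Lemma P3n : forall n l x, length l <= n -> NoDup (l ++ [x]) -> Nat.even (length l) = true -> pf (l ++ [x]) x = None.
Proof.
  induction n as [|n IH]; intros l x Hl Hnd He.
  - destruct l; simpl in *; [auto|lia].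
  - destruct l as [|a [|b r]]; simpl in *; auto; try discriminate.
    apply NoDup_cons_iff in Hnd as [Ha Hnd1]. apply NoDup_cons_iff in Hnd1 as [Hb Hnd2].
    destruct (eqd x a); [subst; exfalso; apply Ha; right; apply in_or_app; right; left; auto|].
    destruct (eqd x b); [subst; exfalso; apply Hb; apply in_or_app; right; left; auto|].
    apply IH; auto. lia.
Qed.

Lemma P3 l x : NoDup (l ++ [x]) -> Nat.even (length l) = true -> pf (l ++ [x]) x = None.
Proof. intros; eapply P3n; eauto. Qed.

Lemma last_in (l' a b : list X) v : l' ++ [v] = a ++ b -> b <> [] -> In v b.
Proof.
  intros H Hb. destruct (exists_last Hb) as [b' [y E]]. subst.
  rewrite app_assoc in H. apply app_inj_tail in H as [_ E]. subst. apply in_or_app; right; left; auto.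
Qed.

Definition grI (b : bool) (h : X) := (if b then [h] else []) ++ oddFin h ++ Ich h.

Fixpoint freeN (n : nat) (u : X) : bool :=
  match n with
  | 0 => false
  | S m => match pf (grI (freeN m (parent u)) (parent u)) u with None => true | Some _ => false end
  end.

Definition free u := freeN (dist u) u.
Definition gr h := if dec (Fin h) then oddFin h ++ [h] else grI (free h) h.
Definition home v := if dec (Fin v) then (if oddb v then parent v else v) else (if free v then v else parent v).
Definition p v := match pf (gr (home v)) v with Some u => u | None => v end.

Lemma free_w : free w = false.
Proof. unfold free. rewrite dist_w. reflexivity. Qed.

Lemma free_eq u : reach u -> u <> w ->
  free u = match pf (grI (free (parent u)) (parent u)) u with None => true | Some _ => false end.
Proof.
  intros H1 H2. destruct (parent_spec u H1 H2) as [_ [_ E]]. unfold free at 1. rewrite E. reflexivity.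
Qed.

Lemma oddFin_spec c h : In c (oddFin h) <-> In c (children h) /\ Fin c /\ oddb c = true.
Proof. unfold oddFin. rewrite filter_In, andb_true_iff, decP. tauto. Qed.

Lemma Ich_spec c h : In c (Ich h) <-> In c (children h) /\ ~ Fin c.
Proof. unfold Ich. rewrite filter_In, negb_true_iff, decF. tauto. Qed.

Lemma gr_mem h u : In u (gr h) -> (u = h /\ (Fin h \/ free h = true)) \/ In u (children h).
Proof.
  unfold gr. destruct (dec (Fin h)) eqn:E.
  - apply (proj1 (decP _)) in E. intros H. apply in_app_or in H as [H|[H|[]]].
    + right. apply oddFin_spec in H. tauto.
    + left. subst. split; auto.
  - unfold grI. intros H. apply in_app_or in H as [H|H].
    + destruct (free h) eqn:F; [|contradiction]. destruct H as [H|[]]. left; auto.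
    + right. apply in_app_or in H as [H|H]. apply oddFin_spec in H; tauto. apply Ich_spec in H; tauto.
Qed.

Lemma gr_nd h : NoDup (gr h).
Proof.
  assert (N1 : NoDup (oddFin h)) by (apply NoDup_filter, children_nd).
  assert (N2 : NoDup (Ich h)) by (apply NoDup_filter, children_nd).
  assert (N3 : NoDup (oddFin h ++ Ich h)).
  { apply NoDup_app; auto. intros a H1 H2. apply oddFin_spec in H1. apply Ich_spec in H2. tauto. }
  unfold gr. destruct (dec (Fin h)).
  - apply NoDup_app; auto. repeat constructor; auto. intros a H1 [E|[]].
    apply oddFin_spec in H1. destruct H1 as [H1 _]. apply (child_neq _ _ H1); auto.
  - unfold grI. destruct (free h); simpl; auto. constructor; auto.
    intro H. apply in_app_or in H as [H|H].
    apply oddFin_spec in H. destruct H as [H _]. apply (child_neq _ _ H); auto.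
    apply Ich_spec in H. destruct H as [H _]. apply (child_neq _ _ H); auto.
Qed.

Lemma Ich_ne h : reach h -> ~ Fin h -> Ich h <> [].
Proof.
  intros H1 H2 E. destruct (konig h H1 H2) as [c [Hc Hf]].
  assert (In c (Ich h)) by (apply Ich_spec; auto). rewrite E in H. contradiction.
Qed.

Lemma child_of_parent v : reach v -> v <> w -> In v (children (parent v)).
Proof. intros H1 H2. destruct (parent_spec v H1 H2) as [A [B C]]. apply children_spec. auto. Qed.

Lemma home_of_gr h u : reach h -> In u (gr h) -> pf (gr h) u <> None -> home u = h.
Proof.
  intros Hh Hu Hp. pose proof (gr_nd h) as Hnd.
  destruct (gr_mem h u Hu) as [[E _]|Hc].
  - subst u. unfold gr in *. unfold home. destruct (dec (Fin h)) eqn:F.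
    + destruct (oddb h) eqn:O; auto. exfalso. apply Hp. apply P3; auto.
      apply (proj1 (decP _)) in F. rewrite (parity h Hh F), Nat.odd_succ in O. auto.
    + unfold grI in Hu. destruct (free h); auto.
      exfalso. simpl in Hu. apply in_app_or in Hu as [Hu|Hu].
      apply oddFin_spec in Hu. destruct Hu as [Hu _]. apply (child_neq _ _ Hu); auto.
      apply Ich_spec in Hu. destruct Hu as [Hu _]. apply (child_neq _ _ Hu); auto.
  - destruct (child_dist h u Hc) as [C1 [C2 [C3 _]]].
    unfold home. destruct (dec (Fin u)) eqn:F.
    + apply (proj1 (decP _)) in F. destruct (oddb u) eqn:O; auto. exfalso.
      (* u is Fin and even: not in gr h *)
      unfold gr in Hu. destruct (dec (Fin h)).
      * apply in_app_or in Hu as [Hu|[Hu|[]]].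
        apply oddFin_spec in Hu. destruct Hu as [_ [_ Hu]]. congruence.
        subst. eapply child_neq; eauto.
      * unfold grI in Hu. apply in_app_or in Hu as [Hu|Hu].
        destruct (free h); [|contradiction]. destruct Hu as [Hu|[]]. subst. eapply child_neq; eauto.
        apply in_app_or in Hu as [Hu|Hu].
        apply oddFin_spec in Hu. destruct Hu as [_ [_ Hu]]. congruence.
        apply Ich_spec in Hu. tauto.
    + apply (proj1 (decF _)) in F. rewrite (free_eq u C1 C2). rewrite C3.
      assert (NF : ~ Fin h) by (intro HF; apply F; eapply Fin_child; eauto).
      unfold gr in Hp. rewrite (proj2 (decF _) NF) in Hp.
      destruct (pf (grI (free h) h) u); auto. contradiction.
Qed.

Lemma partner_ex v : reach v -> v <> w -> exists u, pf (gr (home v)) v = Some u.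
Proof.
  intros Hv Hw.
  destruct (pf (gr (home v)) v) as [u|] eqn:E; [eauto|exfalso].
  pose proof (child_of_parent v Hv Hw) as Hc.
  destruct (parent_spec v Hv Hw) as [Rp _].
  unfold home in E. destruct (dec (Fin v)) eqn:F.
  - apply (proj1 (decP _)) in F. destruct (oddb v) eqn:O.
    + assert (Hin : In v (gr (parent v))).
      { unfold gr. destruct (dec (Fin (parent v))); apply in_or_app.
        left. apply oddFin_spec; auto. right. apply in_or_app. left. apply oddFin_spec; auto. }
      destruct (P2 _ _ (gr_nd _) Hin E) as [l' [El _]].
      unfold gr in El. destruct (dec (Fin (parent v))) eqn:F2.
      * apply app_inj_tail in El as [_ El]. subst. eapply child_neq; eauto.
      * apply (proj1 (decF _)) in F2. unfold grI in El. rewrite app_assoc in El.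
        symmetry in El. apply last_in in El; [|apply Ich_ne; auto]. apply Ich_spec in El. tauto.
    + unfold gr in E. rewrite (proj2 (decP _) F) in E.
      destruct (P2 _ _ (gr_nd v) ltac:(unfold gr; rewrite (proj2 (decP _) F); apply in_or_app; right; left; auto) ltac:(unfold gr; rewrite (proj2 (decP _) F); exact E)) as [l' [El Ev]].
      unfold gr in El. rewrite (proj2 (decP _) F) in El.
      apply app_inj_tail in El as [El _]. subst.
      rewrite (parity v Hv F), Nat.odd_succ, Ev in O. discriminate.
  - apply (proj1 (decF _)) in F. destruct (free v) eqn:Fr.
    + assert (Hin : In v (gr v)).
      { unfold gr. rewrite (proj2 (decF _) F). unfold grI. rewrite Fr. left; auto. }
      destruct (P2 _ _ (gr_nd _) Hin E) as [l' [El _]].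
      unfold gr in El. rewrite (proj2 (decF _) F) in El. unfold grI in El. rewrite Fr in El.
      rewrite app_assoc in El. symmetry in El. apply last_in in El; [|apply Ich_ne; auto].
      apply Ich_spec in El. destruct El as [El _]. exact (child_neq _ _ El eq_refl).
    + rewrite (free_eq v Hv Hw) in Fr.
      assert (NF : ~ Fin (parent v)) by (intro HF; apply F; eapply Fin_child; eauto).
      unfold gr in E. rewrite (proj2 (decF _) NF) in E. rewrite E in Fr. discriminate.
Qed.

Lemma home_reach v : reach v -> v <> w -> reach (home v).
Proof.
  intros H1 H2. destruct (parent_spec v H1 H2) as [R _].
  unfold home. destruct (dec (Fin v)); [destruct (oddb v)|destruct (free v)]; auto.
Qed.

Lemma gr_near h u : In u (gr h) -> u = h \/ In u (nb h).
Proof.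
  intros H. destruct (gr_mem h u H) as [[E _]|H']; auto. right. apply children_spec in H'. tauto.
Qed.

Theorem tree_pairing : exists p : X -> X, forall v, reach v -> v <> w ->
  reach (p v) /\ p v <> w /\ p v <> v /\ p (p v) = v /\
  exists h, reach h /\ (v = h \/ In v (nb h)) /\ (p v = h \/ In (p v) (nb h)).
Proof.
  exists p. intros v Hv Hw.
  destruct (partner_ex v Hv Hw) as [u Hu].
  pose proof (home_reach v Hv Hw) as Rh.
  destruct (P1 _ _ _ (gr_nd _) Hu) as [A [B [C D]]].
  assert (Hhu : home u = home v) by (apply home_of_gr; auto; congruence).
  assert (Pv : p v = u) by (unfold p; rewrite Hu; auto).
  assert (Pu : p u = v) by (unfold p; rewrite Hhu, D; auto).
  rewrite Pv, Pu.
  assert (Ru : reach u /\ u <> w).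
  { destruct (gr_mem _ _ B) as [[E [F|F]]|Hc].
    - rewrite E. split; auto. intro E'. rewrite E' in F. exact (notFin_w F).
    - rewrite E. split; auto. intro E'. rewrite E', free_w in F. discriminate.
    - apply child_dist in Hc. tauto. }
  destruct Ru. repeat split; auto.
  exists (home v). split; auto. split; apply gr_near; auto.
Qed.

End TreeS.

Section Grp.
Variable G : group.
Local Notation "x ** y" := (gmul G x y) (at level 40, left associativity).
Local Notation one := (gone G).
Local Notation inv := (ginv G).

Definition eqG (x y : G) : {x = y} + {x <> y} := excluded_middle_informative (x = y).

Lemma mulKl (x y : G) : inv x ** (x ** y) = y.
Proof. rewrite gmulA, gmulVl, gmul1l. reflexivity. Qed.
Lemma mulKr (x y : G) : x ** (inv x ** y) = y.
Proof. rewrite gmulA, gmulVr, gmul1l. reflexivity. Qed.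
Lemma inv_uniq (a b : G) : a ** b = one -> b = inv a.
Proof. intros H. rewrite <- (mulKl a b), H, gmul1r. reflexivity. Qed.
Lemma inv_inv (x : G) : inv (inv x) = x.
Proof. symmetry. apply inv_uniq. apply gmulVl. Qed.
Lemma inv_mul (x y : G) : inv (x ** y) = inv y ** inv x.
Proof. symmetry. apply inv_uniq. rewrite <- gmulA, mulKr, gmulVr. reflexivity. Qed.
Lemma inv_one : inv one = one.
Proof. symmetry. apply inv_uniq. apply gmul1l. Qed.

Definition prod (l : list G) : G := fold_right (gmul G) one l.
Lemma prod_app l1 l2 : prod (l1 ++ l2) = prod l1 ** prod l2.
Proof. induction l1 as [|a l IH]; simpl. rewrite gmul1l; auto. rewrite IH, gmulA; auto. Qed.

Lemma prod_rev_inv l : prod (rev (map inv l)) = inv (prod l).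
Proof.
  induction l as [|a l IH]; simpl. rewrite inv_one; auto.
  rewrite prod_app, IH; simpl. rewrite gmul1r, inv_mul. auto.
Qed.

Variable Sg : list G.
Hypothesis Sinv : forall s, In s Sg -> In (inv s) Sg.

Definition inball r (g : G) := exists l, incl l Sg /\ length l <= r /\ prod l = g.

Lemma inball_one r : inball r one.
Proof. exists []. split; [intros x []|]. simpl; split; auto; lia. Qed.

Lemma inball_mono r r' g : r <= r' -> inball r g -> inball r' g.
Proof. intros H [l [A [B C]]]. exists l. repeat split; auto. lia. Qed.

Lemma inball_mul r r' a b : inball r a -> inball r' b -> inball (r + r') (a ** b).
Proof.
  intros [l [A [B C]]] [l' [A' [B' C']]]. exists (l ++ l'). repeat split.
  - intros x H. apply in_app_or in H as [H|H]; auto.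
  - rewrite length_app. lia.
  - rewrite prod_app. congruence.
Qed.

Lemma inball_inv r a : inball r a -> inball r (inv a).
Proof.
  intros [l [A [B C]]]. exists (rev (map inv l)). repeat split.
  - intros x H. apply in_rev in H. apply in_map_iff in H as [s [E H]]. subst. auto.
  - rewrite length_rev, length_map. auto.
  - rewrite prod_rev_inv. congruence.
Qed.

Lemma inball_gen s : In s Sg -> inball 1 s.
Proof. intros H. exists [s]. split. intros x [E|[]]; subst; auto. split. simpl; lia. simpl; apply gmul1r. Qed.

Fixpoint words r : list (list G) :=
  match r with 0 => [[]] | S r => words r ++ flat_map (fun s => map (cons s) (words r)) Sg end.

Lemma words_spec r l : In l (words r) <-> incl l Sg /\ length l <= r.
Proof.
  revert l. induction r as [|r IHr]; intros l; simpl.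
  - split. intros [E|[]]; subst; split; [intros x []|simpl; lia].
    intros [_ H]; destruct l; simpl in H; [left; auto|lia].
  - rewrite in_app_iff, in_flat_map, IHr. split.
    + intros [[A B]|[s [Hs Hl]]]. split; auto; lia.
      apply in_map_iff in Hl as [l' [E Hl']]. subst. apply IHr in Hl' as [A B].
      split. intros x [E|H]; subst; auto. simpl; lia.
    + intros [A B]. destruct l as [|s l']. left; split; auto; simpl; lia.
      right. exists s. split. apply A; left; auto. apply in_map. apply IHr. split.
      intros x H; apply A; right; auto. simpl in B; lia.
Qed.

Definition ballL r := nodup eqG (map prod (words r)).
Lemma ballL_spec r g : In g (ballL r) <-> inball r g.
Proof.
  unfold ballL. rewrite nodup_In, in_map_iff. split.
  - intros [l [E H]]. apply words_spec in H as [A B]. exists l; auto.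
  - intros [l [A [B C]]]. exists l. split; auto. apply words_spec; auto.
Qed.
Lemma ballL_nd r : NoDup (ballL r).
Proof. apply NoDup_nodup. Qed.

Fixpoint sublists (l : list G) : list (list G) :=
  match l with [] => [[]] | x :: l => map (cons x) (sublists l) ++ sublists l end.
Lemma sublists_filter f l : In (filter f l) (sublists l).
Proof.
  induction l as [|a l IH]; simpl; auto. destruct (f a); apply in_or_app; [left; apply in_map|right]; auto.
Qed.

Definition eqL (a b : list G) : {a = b} + {a <> b} := excluded_middle_informative (a = b).

Record Lvl := mkLvl {
  lN : nat; lR : nat; cen : G -> G; blk : G -> list G;
  cen_idem : forall g, cen (cen g) = cen g;
  cen_one : cen one = one;
  blk_nd : forall g, NoDup (blk g);
  blk_len : forall g, length (blk g) = lN;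
  blk_mem : forall g h, In h (blk g) <-> cen h = cen g;
  cen_ball : forall g, inball lR (inv (cen g) ** g) }.

Section PartA.
Variable L : Lvl.
Definition tileC c := filter (fun x => dec (cen L (c ** x) = c)) (ballL (lR L)).
Definition Delta T : G -> Prop := fun d => cen L d = d /\ d <> one /\ tileC d = T.
Definition used := nodup eqL (filter (fun T => dec (exists d, Delta T d)) (sublists (ballL (lR L)))).
Definition PP : list (tile G) := ((fun d => d = one), tileC one) :: map (fun T => (Delta T, T)) used.

Lemma tileC_spec c x : In x (tileC c) <-> inball (lR L) x /\ cen L (c ** x) = c.
Proof. unfold tileC; rewrite filter_In, decP, ballL_spec. tauto. Qed.
Lemma tileC_nd c : NoDup (tileC c).
Proof. apply NoDup_filter, ballL_nd. Qed.

Lemma tileC_len c : cen L c = c -> length (tileC c) = lN L.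
Proof.
  intros Hc. rewrite <- (blk_len L c).
  assert (A : NoDup (map (gmul G c) (tileC c))).
  { apply NoDup_map_NoDup_ForallPairs; [|apply tileC_nd].
    intros a b _ _ E. rewrite <- (mulKl c a), E, mulKl. auto. }
  rewrite <- (length_map (gmul G c)). apply Nat.le_antisymm; apply NoDup_incl_length; auto.
  - intros y Hy. apply in_map_iff in Hy as [x [E Hx]]. subst. apply tileC_spec in Hx as [_ Hx].
    apply blk_mem. congruence.
  - apply blk_nd.
  - intros h Hh. apply blk_mem in Hh. rewrite Hc in Hh. apply in_map_iff.
    exists (inv c ** h). split. apply mulKr. apply tileC_spec. rewrite mulKr. split; auto.
    pose proof (cen_ball L h) as B. rewrite Hh in B. auto.
Qed.

Lemma tileC_one c : cen L c = c -> In one (tileC c).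
Proof. intros H. apply tileC_spec. rewrite gmul1r. split; auto. apply inball_one. Qed.

Lemma own_translate g : in_translate G (cen L g) (tileC (cen L g)) g.
Proof.
  exists (inv (cen L g) ** g). rewrite mulKr. split; auto.
  apply tileC_spec. rewrite mulKr. split; auto. apply cen_ball.
Qed.

Lemma translate_cen d g : in_translate G d (tileC d) g -> cen L g = d.
Proof. intros [x [Hx E]]. apply tileC_spec in Hx as [_ Hx]. congruence. Qed.

Lemma used_spec T : In T used <-> In T (sublists (ballL (lR L))) /\ exists d, Delta T d.
Proof. unfold used. rewrite nodup_In, filter_In, decP. tauto. Qed.

Lemma used_center c : cen L c = c -> c <> one -> In (tileC c) used.
Proof.
  intros H1 H2. apply used_spec. split. apply sublists_filter. exists c. repeat split; auto.
Qed.

Lemma PP_entry i D T d : nth_error PP i = Some (D, T) -> D d ->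
  cen L d = d /\ T = tileC d /\
  ((i = 0 /\ d = one) \/ exists j, i = S j /\ nth_error used j = Some T /\ d <> one).
Proof.
  intros H Hd. destruct i as [|j]; simpl in H.
  - injection H as E1 E2. subst. repeat split; auto. apply cen_one.
  - rewrite nth_error_map in H. destruct (nth_error used j) as [T0|] eqn:E; simpl in H; [|discriminate].
    injection H as E1 E2. subst. destruct Hd as [A [B C]]. repeat split; auto. right. eauto.
Qed.

Lemma PP_entry_ex i D T : nth_error PP i = Some (D, T) -> exists d, D d.
Proof.
  intros H. destruct i as [|j]; simpl in H.
  - injection H as E1 E2. subst. exists one; auto.
  - rewrite nth_error_map in H. destruct (nth_error used j) as [T0|] eqn:E; simpl in H; [|discriminate].
    injection H as E1 E2. subst. apply nth_error_In in E. apply used_spec in E. tauto.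
Qed.

Lemma PP_poly : is_polytiling PP.
Proof.
  split; [discriminate|split].
  - intros i D T H. destruct (PP_entry_ex i D T H) as [d Hd].
    destruct (PP_entry i D T d H Hd) as [A [B _]]. subst T. repeat split; eauto.
    apply tileC_nd. apply tileC_one; auto.
  - intros g. set (c := cen L g).
    assert (Huniq : forall i d, (exists D T, nth_error PP i = Some (D, T) /\ D d /\ in_translate G d T g) ->
              d = c /\ ((c = one /\ i = 0) \/ (c <> one /\ exists j, i = S j /\ nth_error used j = Some (tileC c)))).
    { intros i d [D [T [H [Hd Ht]]]]. destruct (PP_entry i D T d H Hd) as [A [B C]]. subst T.
      apply translate_cen in Ht. assert (d = c) by (unfold c; congruence). subst d. split; auto.
      destruct C as [[E1 E2]|[j [E1 [E2 E3]]]]; [left|right]; eauto. }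
    destruct (eqG c one) as [E|E].
    + exists (0, one). split.
      * simpl. exists (fun d => d = one), (tileC one). repeat split; auto. rewrite <- E. apply own_translate.
      * intros [i d] Hx. destruct (Huniq i d Hx) as [Hd [[_ Hi]|[Hn _]]]; simpl in *; [|contradiction].
        subst. congruence.
    + destruct (In_nth_error _ _ (used_center c (cen_idem L g) E)) as [j Hj].
      exists (S j, c). split.
      * simpl. exists (Delta (tileC c)), (tileC c). repeat split; auto.
        rewrite nth_error_map, Hj. auto. apply cen_idem. apply own_translate.
      * intros [i d] Hx. destruct (Huniq i d Hx) as [Hd [[Hn _]|[_ [j' [Hi Hj']]]]]; simpl in *; [contradiction|].
        subst. f_equal. f_equal.
        apply (proj1 (NoDup_nth_error used) (NoDup_nodup _ _)). apply nth_error_Some. congruence. congruence.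
Qed.

Lemma PP_fair : fair PP.
Proof.
  intros i j D T D' T' H H'.
  destruct (PP_entry_ex i D T H) as [d Hd]. destruct (PP_entry_ex j D' T' H') as [d' Hd'].
  destruct (PP_entry i D T d H Hd) as [A [B _]]. destruct (PP_entry j D' T' d' H' Hd') as [A' [B' _]].
  subst. rewrite !tileC_len; auto.
Qed.
End PartA.

Lemma PP_finer (L L' : Lvl) : (forall g h, cen L g = cen L h -> cen L' g = cen L' h) -> finer (PP L) (PP L').
Proof.
  intros Hc i D T d H Hd. destruct (PP_entry L i D T d H Hd) as [A [B _]]. subst T.
  set (c' := cen L' d).
  assert (Ht : forall g, in_translate G d (tileC L d) g -> in_translate G c' (tileC L' c') g).
  { intros g Hg. apply translate_cen in Hg. assert (E : cen L' g = c') by (apply Hc; congruence).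
    rewrite <- E. apply own_translate. }
  destruct (eqG c' one) as [E|E].
  - exists 0, (fun d => d = one), (tileC L' one), one. simpl. repeat split; auto. rewrite <- E. auto.
  - destruct (In_nth_error _ _ (used_center L' c' (cen_idem L' d) E)) as [j Hj].
    exists (S j), (Delta L' (tileC L' c')), (tileC L' c'), c'. simpl. rewrite nth_error_map, Hj.
    repeat split; auto. apply cen_idem.
Qed.

Theorem fromSeq (sq : nat -> Lvl)
  (coh : forall n g h, cen (sq n) g = cen (sq n) h -> cen (sq (S n)) g = cen (sq (S n)) h)
  (mono : forall n, lR (sq n) <= lR (sq (S n)))
  (abs : forall g, exists n, cen (sq n) g = one) : poly_ccc G.
Proof.
  exists (fun n => PP (sq n)). split; [|split; [|split]].
  - intros n. split. apply PP_poly. apply PP_fair.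
  - intros n. simpl. auto.
  - split.
    + intros n x Hx. simpl in *. apply tileC_spec in Hx as [A B]. apply tileC_spec. split.
      eapply inball_mono; [apply mono|]; auto.
      rewrite gmul1l in *. rewrite <- (cen_one (sq (S n))). apply coh. rewrite B. symmetry; apply cen_one.
    + intros g. destruct (abs g) as [n Hn]. exists n. simpl.
      pose proof (own_translate (sq n) g) as [x [Hx E]]. rewrite Hn in Hx, E. rewrite gmul1l in E. subst. auto.
  - intros n. apply PP_finer. apply coh.
Qed.


Hypothesis gen : forall g, exists l, incl l Sg /\ prod l = g.

Lemma inball_ex g : exists r, inball r g.
Proof. destruct (gen g) as [l [A B]]. exists (length l), l. auto. Qed.

Section Step.
Variable L : Lvl.
Hypothesis infG : forall l : list G, exists g, ~ In g l.
Variable t : G.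
Hypothesis Ht : cen L t = t.
Hypothesis Ht1 : t <> one.
Variable D : nat.
Hypothesis HD : inball D t.

Definition nbB c := map (cen L) (flat_map (fun z => map (fun s => z ** s) Sg) (blk L c)).
Definition ff y := if eqG y t then one else y.
Definition nb' x := map ff (nbB x ++ (if eqG x one then nbB t else [])).
Definition rch v := reach G nb' one v.

Lemma rch_step a b : rch a -> In b (nb' a) -> rch b.
Proof. intros H1 H2. exact (proj1 (reach_nb G nb' one a b H1 H2)). Qed.

Lemma ff_center y : cen L y = y -> cen L (ff y) = ff y /\ ff y <> t.
Proof.
  intros H. unfold ff. destruct (eqG y t). split. apply cen_one. auto. split; auto.
Qed.

Lemma nbB_center c y : In y (nbB c) -> cen L y = y.
Proof. intros H. apply in_map_iff in H as [z [E _]]. subst. apply cen_idem. Qed.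

Lemma R1 v : rch v -> cen L v = v /\ v <> t.
Proof.
  intros [n Hn]. revert v Hn. induction n as [|n IH]; intros v Hn; simpl in Hn.
  - subst. split. apply cen_one. auto.
  - destruct Hn as [Hn|[x [_ Hx]]]; auto.
    apply in_map_iff in Hx as [y [E Hy]]. subst. apply ff_center.
    apply in_app_or in Hy as [Hy|Hy]. eapply nbB_center; eauto.
    destruct (eqG x one); [|contradiction]. eapply nbB_center; eauto.
Qed.

Lemma nbB_step x s : In s Sg -> In (cen L (x ** s)) (nbB (cen L x)).
Proof.
  intros Hs. apply in_map. apply in_flat_map. exists x. split.
  apply blk_mem. rewrite cen_idem; auto. apply in_map; auto.
Qed.

Lemma R2' g : rch (ff (cen L g)).
Proof.
  destruct (gen g) as [l [Hl E]]. subst g. induction l as [|s l IH] using rev_ind.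
  - simpl. rewrite cen_one. unfold ff. destruct (eqG one t). congruence. apply reach_w.
  - rewrite prod_app. simpl. rewrite gmul1r.
    assert (Hs : In s Sg) by (apply Hl; apply in_or_app; right; left; auto).
    assert (IH' : rch (ff (cen L (prod l)))) by (apply IH; intros x Hx; apply Hl; apply in_or_app; auto).
    eapply rch_step; [exact IH'|].
    pose proof (nbB_step (prod l) s Hs) as Hn.
    unfold nb'. apply in_map. unfold ff. destruct (eqG (cen L (prod l)) t) as [E|E].
    + destruct (eqG one one); [|congruence]. apply in_or_app. right. rewrite <- E. exact Hn.
    + destruct (eqG (cen L (prod l)) one); apply in_or_app; left; auto.
Qed.

Lemma R2 c : cen L c = c -> c <> t -> rch c.
Proof.
  intros H1 H2. pose proof (R2' c) as H. rewrite H1 in H. unfold ff in H.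
  destruct (eqG c t); [contradiction|auto].
Qed.

Lemma rch_inf : forall Lst, exists v, rch v /\ ~ In v Lst.
Proof.
  intros Lst. destruct (infG (flat_map (blk L) (t :: Lst))) as [g Hg].
  exists (cen L g). split.
  - apply R2. apply cen_idem. intro E. apply Hg. apply in_flat_map. exists t. split. left; auto.
    apply blk_mem. congruence.
  - intro H. apply Hg. apply in_flat_map. exists (cen L g). split. right; auto.
    apply blk_mem. rewrite cen_idem; auto.
Qed.

Definition B := lR L + 1 + lR L.

Lemma E1 c y : cen L c = c -> In y (nbB c) -> inball B (inv c ** y).
Proof.
  intros Hc H. apply in_map_iff in H as [zs [Ey Hz]]. apply in_flat_map in Hz as [z [Hz Hs]].
  apply in_map_iff in Hs as [s [Es Hs]]. subst zs y.
  apply blk_mem in Hz. rewrite Hc in Hz.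
  assert (Eq : (inv (cen L z) ** z) ** s ** inv (inv (cen L (z ** s)) ** (z ** s)) = inv c ** cen L (z ** s)).
  { rewrite Hz, inv_mul, inv_inv, inv_mul. rewrite <- !gmulA, !mulKr. auto. }
  rewrite <- Eq. unfold B. apply inball_mul. apply inball_mul. apply cen_ball. apply inball_gen; auto.
  apply inball_inv. apply cen_ball.
Qed.

Lemma E2 x y : rch x -> In y (nb' x) -> inball (B + D) (inv x ** y).
Proof.
  intros Hx Hy. destruct (R1 x Hx) as [Cx _].
  apply in_map_iff in Hy as [y0 [E Hy0]]. subst y. apply in_app_or in Hy0 as [Hy0|Hy0].
  - pose proof (E1 x y0 Cx Hy0) as HB. unfold ff. destruct (eqG y0 t) as [E|E].
    + subst y0. replace (inv x ** one) with ((inv x ** t) ** inv t).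
      apply inball_mul; auto. apply inball_inv; auto.
      rewrite <- gmulA, gmulVr. auto.
    + eapply inball_mono; [|exact HB]. lia.
  - destruct (eqG x one) as [Ex|Ex]; [|destruct Hy0]. subst x.
    pose proof (E1 t y0 Ht Hy0) as HB. unfold ff. destruct (eqG y0 t) as [E|E].
    + rewrite gmul1r. apply inball_mono with 0. lia. rewrite inv_one. apply inball_one.
    + rewrite inv_one, gmul1l. replace y0 with (t ** (inv t ** y0)) by apply mulKr.
      replace (B + D) with (D + B) by lia. apply inball_mul; auto.
Qed.

Lemma E3 h v : rch h -> (v = h \/ In v (nb' h)) -> inball (B + D) (inv h ** v).
Proof.
  intros H [E|E]. subst. rewrite gmulVl. apply inball_one. apply E2; auto.
Qed.

Definition pp := proj1_sig (constructive_indefinite_description _ (tree_pairing G nb' one rch_inf)).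
Lemma pp_spec v : rch v -> v <> one ->
  rch (pp v) /\ pp v <> one /\ pp v <> v /\ pp (pp v) = v /\
  exists h, rch h /\ (v = h \/ In v (nb' h)) /\ (pp v = h \/ In (pp v) (nb' h)).
Proof. unfold pp. destruct constructive_indefinite_description as [p Hp]. simpl. apply Hp. Qed.

Definition K := 2 * (B + D) + D.
Definition q c := if eqG c one then t else if eqG c t then one else pp c.

Lemma q_one : q one = t.
Proof. unfold q. destruct (eqG one one); [auto|contradiction]. Qed.
Lemma q_t : q t = one.
Proof. unfold q. destruct (eqG t one); [contradiction|]. destruct (eqG t t); [auto|contradiction]. Qed.
Lemma q_other c : c <> one -> c <> t -> q c = pp c.
Proof. intros H1 H2. unfold q. destruct (eqG c one); [contradiction|]. destruct (eqG c t); [contradiction|auto]. Qed.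

Lemma q_spec c : cen L c = c -> cen L (q c) = q c /\ q c <> c /\ q (q c) = c /\ inball K (inv c ** q c).
Proof.
  intros Hc. destruct (eqG c one) as [E1|E1].
  - subst c. rewrite q_one, q_t. repeat split; auto.
    rewrite inv_one, gmul1l. eapply inball_mono; [|exact HD]. unfold K; lia.
  - destruct (eqG c t) as [E2|E2].
    + subst c. rewrite q_t, q_one. repeat split; auto. apply cen_one.
      rewrite gmul1r. eapply inball_mono; [|apply inball_inv; exact HD]. unfold K; lia.
    + destruct (pp_spec c (R2 c Hc E2) E1) as [A [Bn [C [Dd [h [Hh [Hv Hp]]]]]]].
      destruct (R1 _ A) as [Cp Tp]. rewrite (q_other c E1 E2), (q_other (pp c) Bn Tp). repeat split; auto.
      replace (inv c ** pp c) with (inv (inv h ** c) ** (inv h ** pp c)).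
      eapply inball_mono; [|apply inball_mul; [apply inball_inv; apply E3; eauto|apply E3; eauto]]. unfold K; lia.
      rewrite inv_mul, inv_inv, <- gmulA, mulKr. auto.
Qed.

Definition sel c := if dec (c = one \/ q c = one) then one
  else epsilon (inhabits one) (fun x => x = c \/ x = q c).

Lemma sel_in c : cen L c = c -> sel c = c \/ sel c = q c.
Proof.
  intros Hc. unfold sel. destruct (dec (c = one \/ q c = one)) eqn:E.
  - apply (proj1 (decP _)) in E. destruct E as [E|E]; [left|right]; auto.
  - apply epsilon_spec. exists c. auto.
Qed.

Lemma sel_q c : cen L c = c -> sel (q c) = sel c.
Proof.
  intros Hc. destruct (q_spec c Hc) as [_ [_ [Hqq _]]]. unfold sel. rewrite Hqq.
  assert (E1 : (q c = one \/ c = one) = (c = one \/ q c = one)) by (apply propositional_extensionality; tauto).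
  assert (E2 : (fun x => x = q c \/ x = c) = (fun x => x = c \/ x = q c)).
  { apply functional_extensionality. intros x. apply propositional_extensionality; tauto. }
  rewrite E1, E2. auto.
Qed.

Lemma sel_center c : cen L c = c -> cen L (sel c) = sel c.
Proof. intros Hc. destruct (sel_in c Hc) as [E|E]; rewrite E; auto. apply q_spec; auto. Qed.

Lemma sel_eq a b : cen L a = a -> cen L b = b -> (sel a = sel b <-> b = a \/ b = q a).
Proof.
  intros Ha Hb. destruct (q_spec a Ha) as [_ [_ [Qa _]]]. destruct (q_spec b Hb) as [_ [_ [Qb _]]]. split.
  - intros E. destruct (sel_in a Ha) as [A|A]; destruct (sel_in b Hb) as [C|C]; rewrite A, C in E.
    + left; auto.
    + right. rewrite E, Qb. auto.
    + right; auto.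
    + left. rewrite <- Qa, E, Qb. auto.
  - intros [E|E]; subst; auto. symmetry. apply sel_q; auto.
Qed.

Lemma sel_sel c : cen L c = c -> sel (sel c) = sel c.
Proof.
  intros Hc. symmetry. apply sel_eq; auto. apply sel_center; auto.
  destruct (sel_in c Hc); auto.
Qed.

Definition cen' g := sel (cen L g).
Definition blk' g := blk L (cen' g) ++ blk L (q (cen' g)).

Lemma cen'_center g : cen L (cen' g) = cen' g.
Proof. apply sel_center, cen_idem. Qed.

Lemma L'_idem g : cen' (cen' g) = cen' g.
Proof. unfold cen' at 1. rewrite cen'_center. apply sel_sel, cen_idem. Qed.

Lemma L'_one : cen' one = one.
Proof.
  unfold cen', sel. rewrite cen_one. destruct (dec (one = one \/ q one = one)) eqn:E; auto.
  exfalso. apply (proj1 (decF _)) in E. apply E. left; auto.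
Qed.

Lemma L'_nd g : NoDup (blk' g).
Proof.
  apply NoDup_app; try apply blk_nd. intros x H1 H2. apply blk_mem in H1. apply blk_mem in H2.
  pose proof (cen'_center g) as C. destruct (q_spec _ C) as [C2 [N _]].
  apply N. congruence.
Qed.

Lemma L'_len g : length (blk' g) = 2 * lN L.
Proof. unfold blk'. rewrite length_app, !blk_len. lia. Qed.

Lemma L'_mem g h : In h (blk' g) <-> cen' h = cen' g.
Proof.
  pose proof (cen'_center g) as C. destruct (q_spec _ C) as [C2 _].
  unfold blk'. rewrite in_app_iff, !blk_mem, C, C2.
  assert (Sc : sel (cen' g) = cen' g) by (unfold cen'; apply sel_sel, cen_idem).
  change (cen' h) with (sel (cen L h)).
  rewrite <- (sel_eq (cen' g) (cen L h) C (cen_idem L h)). rewrite Sc. split; auto.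
Qed.

Lemma L'_ball g : inball (K + lR L) (inv (cen' g) ** g).
Proof.
  replace (inv (cen' g) ** g) with ((inv (cen' g) ** cen L g) ** (inv (cen L g) ** g))
    by (rewrite <- gmulA, mulKr; auto).
  apply inball_mul; [|apply cen_ball].
  unfold cen'. destruct (sel_in (cen L g) (cen_idem L g)) as [E|E]; rewrite E.
  - rewrite gmulVl. apply inball_one.
  - replace (inv (q (cen L g)) ** cen L g) with (inv (inv (cen L g) ** q (cen L g)))
      by (rewrite inv_mul, inv_inv; auto).
    apply inball_inv. apply q_spec, cen_idem.
Qed.

Definition Lnext : Lvl := mkLvl (2 * lN L) (K + lR L) cen' blk' L'_idem L'_one L'_nd L'_len L'_mem L'_ball.

Lemma Lnext_spec : (forall g h, cen L g = cen L h -> cen Lnext g = cen Lnext h) /\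
  lR L <= lR Lnext /\ cen Lnext t = one.
Proof.
  split; [|split].
  - intros g h E. simpl. unfold cen'. congruence.
  - simpl. lia.
  - simpl. unfold cen', sel. rewrite Ht. destruct (dec (t = one \/ q t = one)) eqn:E; auto.
    exfalso. apply (proj1 (decF _)) in E. apply E. right. apply q_t.
Qed.
End Step.

Lemma step_ex (L : Lvl) (infG : forall l : list G, exists g, ~ In g l) (t : G) :
  cen L t = t -> t <> one -> exists L', (forall g h, cen L g = cen L h -> cen L' g = cen L' h) /\
  lR L <= lR L' /\ cen L' t = one.
Proof.
  intros H1 H2. destruct (inball_ex t) as [D HD].
  exists (Lnext L infG t H1 H2 D HD). apply Lnext_spec.
Qed.

Section Inf.
Hypothesis infG : forall l : list G, exists g, ~ In g l.
Hypothesis Sne : Sg <> [].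

Lemma words_prefix r m : exists suf, words (r + m) = words r ++ suf.
Proof.
  induction m as [|m [suf IH]].
  - exists []. rewrite Nat.add_0_r, app_nil_r. auto.
  - rewrite Nat.add_succ_r. simpl. rewrite IH, <- app_assoc. eauto.
Qed.

Lemma words_len r : r < length (words r).
Proof.
  assert (HS : length Sg <> 0) by (intro E; apply length_zero_iff_nil in E; contradiction).
  induction r as [|r IH]; simpl; auto.
  rewrite length_app, (flat_map_constant_length (c := length (words r))).
  - nia.
  - intros; apply length_map.
Qed.

Definition e k := nth k (map prod (words k)) one.

Lemma e_surj g : exists k, e k = g.
Proof.
  destruct (gen g) as [l [Hl E]].
  assert (Hw : In l (words (length l))) by (apply words_spec; auto).
  destruct (In_nth _ _ [] Hw) as [j [Hj Ej]].
  exists j. unfold e. change one with (prod []). rewrite map_nth. rewrite <- E. f_equal.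
  destruct (le_lt_dec (length l) j) as [H|H].
  - destruct (words_prefix (length l) (j - length l)) as [suf Es].
    replace (words j) with (words (length l) ++ suf) by (rewrite <- Es; f_equal; lia).
    rewrite app_nth1; auto.
  - destruct (words_prefix j (length l - j)) as [suf Es].
    replace (j + (length l - j)) with (length l) in Es by lia.
    rewrite <- Ej, Es. rewrite app_nth1; auto. apply words_len.
Qed.

Lemma L0_nd (g : G) : NoDup [g].
Proof. repeat constructor. intros []. Qed.
Lemma L0_mem (g h : G) : In h [g] <-> (fun x => x) h = (fun x => x) g.
Proof. simpl. split. intros [E|[]]; auto. intros E; left; auto. Qed.
Lemma L0_ball (g : G) : inball 0 (inv ((fun x => x) g) ** g).
Proof. rewrite gmulVl. apply inball_one. Qed.

Definition L0 : Lvl := mkLvl 1 0 (fun x => x) (fun g => [g]) (fun g => eq_refl) eq_refl L0_nd (fun g => eq_refl) L0_mem L0_ball.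

Lemma step_all (L : Lvl) (n : nat) : exists L', (forall g h, cen L g = cen L h -> cen L' g = cen L' h) /\
  lR L <= lR L' /\ cen L' (e n) = one.
Proof.
  destruct (eqG (cen L (e n)) one) as [E|E].
  - exists L. auto.
  - destruct (step_ex L infG (cen L (e n)) (cen_idem L _) E) as [L' [A [B' C]]].
    exists L'. repeat split; auto. rewrite <- C. apply A. symmetry; apply cen_idem.
Qed.

Fixpoint sq n : Lvl := match n with
  | 0 => L0
  | S m => proj1_sig (constructive_indefinite_description _ (step_all (sq m) m)) end.

Lemma sq_spec n : (forall g h, cen (sq n) g = cen (sq n) h -> cen (sq (S n)) g = cen (sq (S n)) h) /\
  lR (sq n) <= lR (sq (S n)) /\ cen (sq (S n)) (e n) = one.
Proof. simpl. destruct constructive_indefinite_description as [L' H]. simpl. auto. Qed.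

Theorem inf_case : poly_ccc G.
Proof.
  apply (fromSeq sq).
  - intros n. apply sq_spec.
  - intros n. apply sq_spec.
  - intros g. destruct (e_surj g) as [k Ek]. exists (S k). rewrite <- Ek. apply sq_spec.
Qed.
End Inf.

Lemma fin_R (l : list G) : exists R, forall g, In g l -> inball R g.
Proof.
  induction l as [|a l [R IH]].
  - exists 0. intros g [].
  - destruct (inball_ex a) as [r Hr]. exists (r + R). intros g [E|H].
    + subst. eapply inball_mono; [|exact Hr]. lia.
    + eapply inball_mono; [|apply IH; auto]. lia.
Qed.

Theorem fin_case (Lc : list G) (HLc : forall g, In g Lc) : poly_ccc G.
Proof.
  destruct (fin_R Lc) as [R HR].
  assert (A1 : forall g : G, (fun _ : G => one) ((fun _ : G => one) g) = (fun _ : G => one) g) by reflexivity.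
  assert (A3 : forall g : G, NoDup ((fun _ : G => nodup eqG Lc) g)) by (intros; apply NoDup_nodup).
  assert (A4 : forall g : G, length ((fun _ : G => nodup eqG Lc) g) = length (nodup eqG Lc)) by reflexivity.
  assert (A5 : forall g h : G, In h ((fun _ : G => nodup eqG Lc) g) <-> (fun _ : G => one) h = (fun _ : G => one) g).
  { intros g h. simpl. rewrite nodup_In. split; auto. }
  assert (A6 : forall g : G, inball R (inv ((fun _ : G => one) g) ** g)).
  { intros g. simpl. rewrite inv_one, gmul1l. apply HR; auto. }
  apply (fromSeq (fun _ => mkLvl (length (nodup eqG Lc)) R (fun _ => one) (fun _ => nodup eqG Lc) A1 eq_refl A3 A4 A5 A6)).
  - intros; reflexivity.
  - intros; simpl; lia.
  - intros g. exists 0. reflexivity.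
Qed.

End Grp.

Theorem theorem6p1 (G : group) : finitely_generated G -> poly_ccc G.
Proof.
  intros [S HS].
  set (Sg := S ++ map (ginv G) S).
  assert (Sinv : forall s, In s Sg -> In (ginv G s) Sg).
  { intros s H. unfold Sg in *. apply in_app_or in H as [H|H]; apply in_or_app.
    - right. apply in_map; auto.
    - left. apply in_map_iff in H as [s0 [E H]]. subst. rewrite inv_inv. auto. }
  assert (gen : forall g, exists l, incl l Sg /\ prod G l = g).
  { apply (HS (fun g => exists l, incl l Sg /\ prod G l = g)).
    - exists []. split; [intros x []|reflexivity].
    - intros s Hs. exists [s]. split. intros x [E|[]]; subst; unfold Sg; apply in_or_app; auto.
      simpl. apply gmul1r.
    - intros x y [l1 [A1 B1]] [l2 [A2 B2]]. exists (l1 ++ l2). split.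
      intros z Hz; apply in_app_or in Hz as [Hz|Hz]; auto. rewrite prod_app. congruence.
    - intros x [l [A B]]. exists (rev (map (ginv G) l)). split.
      intros z Hz. apply in_rev in Hz. apply in_map_iff in Hz as [s [E Hs]]. subst. auto.
      rewrite prod_rev_inv. congruence. }
  destruct (classic (exists Lc : list G, forall g, In g Lc)) as [[Lc HLc]|Hinf].
  - eapply fin_case; eauto.
  - assert (infG : forall l : list G, exists g, ~ In g l).
    { intros l. apply NNPP. intro H. apply Hinf. exists l. intros g. apply NNPP. intro Hg. apply H. eauto. }
    assert (Sne : Sg <> []).
    { intro E. apply Hinf. exists [gone G]. intros g. destruct (gen g) as [l [A B]].
      destruct l as [|s l]. left; auto. exfalso. rewrite E in A. apply (A s). left; auto. }
    eapply inf_case; eauto.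
Qed.
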